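(* Let $(M,F)$ be a conic pseudo-Finsler surface and $\overline F=e^\phi F$ an anisotropic conformal change. Then $$\phi_{;2}P+P_{;2}+\varepsilon\phi_{;2}Q_{;2}-(\mathcal I\phi_{;2}+1)Q-F^2\phi_{,2}=0.$$
   Context: Throughout, $M$ is a smooth $2$-dimensional manifold, $TM_0$ its slit tangent bundle with induced local coordinates $(x^i,y^i)$, $\partial_i=\partial/\partial x^i$, $\dot\partial_i=\partial/\partial y^i$. A function is called $h(r)$ if it is positively homogeneous of degree $r$ in $y$. A conic pseudo-Finsler surface $(M,F)$ consists of a conic subbundle $\mathcal A\subset TM_0$ (an open set invariant under $y\mapsto\lambda y$, $\lambda>0$, projecting onto $M$) and a smooth $h(1)$ function $F:\mathcal A\to\mathbb R$ such that $g_{ij}=\frac12\dot\partial_i\dot\partial_jF^2$ is nondegenerate. Put $\ell_i=\dot\partial_iF$, $\ell^i=y^i/F$. Modified Berwald frame: $\varepsilon\in\{1,-1\}$ and a covector $m_i$ satisfy $g_{ij}=\ell_i\ell_j+\varepsilon m_im_j$, $m^i=g^{ij}m_j$, so $\ell^i\ell_i=1$, $\ell^im_i=0$, $m^im_i=\varepsilon$. The main scalar $\mathcal I$ ($h(0)$) is defined by $FC_{ijk}=\mathcal I\,m_im_jm_k$, where $C_{ijk}=\frac14\dot\partial_i\dot\partial_j\dot\partial_kF^2$. The geodesic spray of $F$ is $S=y^i\partial_i-2G^i\dot\partial_i$; $G^i_j=\dot\partial_jG^i$, $\delta_i=\partial_i-G^j_i\dot\partial_j$. For a smooth function $f$: $f_{;1}=y^i\dot\partial_if$,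 $f_{;2}=\varepsilon Fm^i\dot\partial_if$, $f_{,1}=\ell^i\delta_if$, $f_{,2}=\varepsilon m^i\delta_if$; iterated derivatives are read left to right, e.g. $f_{,1;2}=(f_{,1})_{;2}$. Anisotropic conformal change: $\phi$ is a smooth $h(0)$ function on $\mathcal A$ with $F^2(\dot\partial_i\dot\partial_j\phi+\dot\partial_i\phi\,\dot\partial_j\phi)m^im^j+\varepsilon\ne0$, and $\overline F=e^{\phi}F$. Set $\sigma=\phi_{;2;2}+\varepsilon\mathcal I\phi_{;2}+2(\phi_{;2})^2$, $\rho=1/(\sigma+\varepsilon-(\phi_{;2})^2)$, $2Q=\varepsilon\rho F^2(\phi_{;2}\phi_{,1}+\phi_{,1;2}-2\phi_{,2})$, $2P=-\rho F^2\phi_{;2}(\phi_{;2}\phi_{,1}+\phi_{,1;2}-2\phi_{,2})+F^2\phi_{,1}$. *)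

(* Defs.v *)
From Stdlib Require Import Reals.
From Coquelicot Require Import Coquelicot.
Open Scope R_scope.

(* Local picture: a chart x = (x^1,x^2) of M and induced coordinates
   (x^1,x^2,y^1,y^2) on TM.  A point of TM is ((x1,x2),(y1,y2)).
   Index convention: i = 0,1 stand for the paper's indices 1,2. *)
Definition pt := ((R * R) * (R * R))%type.

Definition coord (z : pt) (k : nat) : R :=
  match k with
  | 0 => fst (fst z) | 1 => snd (fst z) | 2 => fst (snd z) | _ => snd (snd z)
  end.

Definition upd (z : pt) (k : nat) (t : R) : pt :=
  match k with
  | 0 => ((t, snd (fst z)), snd z)
  | 1 => ((fst (fst z), t), snd z)
  | 2 => (fst z, (t, snd (snd z)))
  | _ => (fst z, (fst (snd z), t))
  end.

Definition pd (k : nat) (f : pt -> R) (z : pt) : R :=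
  Derive (fun t => f (upd z k t)) (coord z k).

Definition dx (i : nat) (f : pt -> R) : pt -> R := pd i f.
Definition dy (i : nat) (f : pt -> R) : pt -> R := pd (2 + i) f.
Definition yc (z : pt) (i : nat) : R := coord z (2 + i).

Definition sum2 (f : nat -> R) : R := f 0%nat + f 1%nat.

Fixpoint Ck (n : nat) (A : pt -> Prop) (f : pt -> R) : Prop :=
  (forall z, A z -> continuous f z) /\
  match n with
  | 0 => True
  | S n' => forall k, (k < 4)%nat ->
      (forall z, A z -> ex_derive (fun t => f (upd z k t)) (coord z k)) /\
      Ck n' A (pd k f)
  end.
Definition smooth_on (A : pt -> Prop) (f : pt -> R) : Prop := forall n, Ck n A f.

Definition scale (l : R) (z : pt) : pt := (fst z, (l * fst (snd z), l * snd (snd z))).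

Definition conic (A : pt -> Prop) : Prop :=
  open A /\ (forall z, A z -> snd z <> (0, 0)) /\
  (forall z l, A z -> 0 < l -> A (scale l z)).

Definition homog (r : nat) (A : pt -> Prop) (f : pt -> R) : Prop :=
  forall z l, A z -> 0 < l -> f (scale l z) = l ^ r * f z.

Section Finsler.
Variable F : pt -> R.
Variable eps : R.
Variable m : nat -> pt -> R.

Definition F2 : pt -> R := fun z => F z ^ 2.
Definition g (i j : nat) : pt -> R := fun z => / 2 * dy i (dy j F2) z.
Definition detg (z : pt) : R := g 0 0 z * g 1 1 z - g 0 1 z * g 1 0 z.
Definition ginv (i j : nat) (z : pt) : R :=
  match i, j with
  | 0, 0 => g 1 1 z / detg z
  | 1, 1 => g 0 0 z / detg z
  | _, _ => - g i j z / detg z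
  end.
Definition ell (i : nat) : pt -> R := dy i F.
Definition ellu (i : nat) (z : pt) : R := yc z i / F z.
Definition Cijk (i j k : nat) : pt -> R :=
  fun z => / 4 * dy i (dy j (dy k F2)) z.
Definition mu (i : nat) (z : pt) : R := sum2 (fun j => ginv i j z * m j z).

(* geodesic spray coefficients G^i *)
Definition Gs (i : nat) (z : pt) : R :=
  / 4 * sum2 (fun l => ginv i l z *
     (sum2 (fun k => yc z k * dx k (dy l F2) z) - dx l F2 z)).
Definition Gji (j i : nat) : pt -> R := dy i (Gs j).
Definition delta (i : nat) (f : pt -> R) (z : pt) : R :=
  dx i f z - sum2 (fun j => Gji j i z * dy j f z).

Definition dv1 (f : pt -> R) (z : pt) : R := sum2 (fun i => yc z i * dy i f z).          (* f_{;1} *)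
Definition dv2 (f : pt -> R) (z : pt) : R := eps * F z * sum2 (fun i => mu i z * dy i f z). (* f_{;2} *)
Definition dh1 (f : pt -> R) (z : pt) : R := sum2 (fun i => ellu i z * delta i f z).     (* f_{,1} *)
Definition dh2 (f : pt -> R) (z : pt) : R := eps * sum2 (fun i => mu i z * delta i f z). (* f_{,2} *)

Variable I : pt -> R.
Variable phi : pt -> R.

Definition sigma (z : pt) : R :=
  dv2 (dv2 phi) z + eps * I z * dv2 phi z + 2 * (dv2 phi z) ^ 2.
Definition rho (z : pt) : R := / (sigma z + eps - (dv2 phi z) ^ 2).
Definition Qc (z : pt) : R :=
  / 2 * (eps * rho z * F z ^ 2 *
         (dv2 phi z * dh1 phi z + dv2 (dh1 phi) z - 2 * dh2 phi z)).
Definition Pc (z : pt) : R :=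
  / 2 * (- rho z * F z ^ 2 * dv2 phi z *
           (dv2 phi z * dh1 phi z + dv2 (dh1 phi) z - 2 * dh2 phi z)
         + F z ^ 2 * dh1 phi z).

End Finsler.

(* Main.v *)
Require Import Defs.
From Stdlib Require Import Reals Lra Lia.
From Coquelicot Require Import Coquelicot.
Open Scope R_scope.


Lemma cont_pair {T U V : UniformSpace} (f : T -> U) (g : T -> V) x :
  continuous f x -> continuous g x -> continuous (fun t => (f t, g t)) x.
Proof.
  intros Hf Hg.
  apply (continuous_comp_2 f g (fun a b => (a,b))); auto.
  apply continuous_ext with (f := fun p : U * V => p).
  - intros [a b]; reflexivity.
  - apply continuous_id.
Qed.

Lemma cont_coord (z : pt) k : continuous (fun w : pt => coord w k) z.
Proof.
  destruct z as [[a b] [c d]].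
  destruct k as [|[|[|k]]]; simpl.
  - apply (continuous_comp fst fst). apply continuous_fst. simpl; apply continuous_fst.
  - apply (continuous_comp fst snd). apply continuous_fst. simpl; apply continuous_snd.
  - apply (continuous_comp snd fst). apply continuous_snd. simpl; apply continuous_fst.
  - apply (continuous_comp snd snd). apply continuous_snd. simpl; apply continuous_snd.
Qed.

Lemma cont_upd (z : pt) k t0 : continuous (fun t => upd z k t) t0.
Proof.
  destruct k as [|[|[|k]]]; simpl;
  repeat first [ apply cont_pair | apply continuous_id | apply continuous_const ].
Qed.

Lemma upd_coord z k : upd z k (coord z k) = z.
Proof. destruct z as [[a b][c d]]; destruct k as [|[|[|[|k]]]]; reflexivity. Qed.

Lemma loc_upd (A : pt -> Prop) z k : open A -> A z ->
  locally (coord z k) (fun t => A (upd z k t)).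
Proof.
  intros HA Hz.
  pose proof (cont_upd z k (coord z k)) as Hc.
  unfold continuous in Hc. rewrite upd_coord in Hc.
  exact (Hc A (HA z Hz)).
Qed.

Lemma pd_ext (A : pt -> Prop) (f g : pt -> R) k z : open A -> A z ->
  (forall w, A w -> f w = g w) -> pd k f z = pd k g z.
Proof.
  intros HA Hz H. unfold pd. apply Derive_ext_loc.
  apply (filter_imp (fun t => A (upd z k t))). intros t Ht; auto.
  apply loc_upd; auto.
Qed.

Lemma exd_ext (A : pt -> Prop) (f g : pt -> R) k z : open A -> A z ->
  (forall w, A w -> f w = g w) ->
  ex_derive (fun t => f (upd z k t)) (coord z k) ->
  ex_derive (fun t => g (upd z k t)) (coord z k).
Proof.
  intros HA Hz H. apply ex_derive_ext_loc.
  apply (filter_imp (fun t => A (upd z k t))). intros t Ht; auto.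
  apply loc_upd; auto.
Qed.

Lemma Ck_ext (A : pt -> Prop) n : open A -> forall f g : pt -> R,
  (forall w, A w -> f w = g w) -> Ck n A f -> Ck n A g.
Proof.
  intros HA. induction n as [|n IH]; intros f g H [Hc Hr].
  - split; auto. intros z Hz. apply (continuous_ext_loc g f z).
    apply (filter_imp A). intros; auto. apply HA; auto. auto.
  - split.
    + intros z Hz. apply (continuous_ext_loc g f z).
      apply (filter_imp A). intros; auto. apply HA; auto. auto.
    + intros k Hk. destruct (Hr k Hk) as [Hd Hn]. split.
      * intros z Hz. apply (exd_ext A f g); auto.
      * apply (IH (pd k f)); auto. intros w Hw. apply (pd_ext A); auto.
Qed.

Lemma Ck_mono (A : pt -> Prop) n (f : pt -> R) : Ck (S n) A f -> Ck n A f.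
Proof.
  revert f. induction n as [|n IH]; intros f [Hc Hr].
  - split; auto.
  - split; auto. intros k Hk. destruct (Hr k Hk) as [Hd Hn]. split; auto.
Qed.

Lemma Ck_pd (A : pt -> Prop) n (f : pt -> R) k : Ck (S n) A f -> (k < 4)%nat -> Ck n A (pd k f).
Proof. intros [_ H] Hk. apply (H k Hk). Qed.

Lemma Ck_exd (A : pt -> Prop) n (f : pt -> R) k z : Ck (S n) A f -> (k < 4)%nat -> A z ->
  ex_derive (fun t => f (upd z k t)) (coord z k).
Proof. intros [_ H] Hk Hz. apply (H k Hk); auto. Qed.

Lemma Ck_plus (A : pt -> Prop) n : open A -> forall f g : pt -> R,
  Ck n A f -> Ck n A g -> Ck n A (fun w => f w + g w).
Proof.
  intros HA. induction n as [|n IH]; intros f g Hf Hg.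
  - destruct Hf as [Hf _]; destruct Hg as [Hg _]. split; auto.
    intros z Hz. exact (continuous_plus f g z (Hf z Hz) (Hg z Hz)).
  - split.
    + intros z Hz. exact (continuous_plus f g z (proj1 Hf z Hz) (proj1 Hg z Hz)).
    + intros k Hk. split.
      * intros z Hz. apply (ex_derive_plus (fun t => f (upd z k t)) (fun t => g (upd z k t)));
        eapply Ck_exd; eauto.
      * apply (Ck_ext A n HA (fun w => pd k f w + pd k g w)).
        -- intros w Hw. unfold pd. rewrite Derive_plus; auto; eapply Ck_exd; eauto.
        -- apply IH; apply Ck_pd; auto.
Qed.

Lemma Ck_mult (A : pt -> Prop) n : open A -> forall f g : pt -> R,
  Ck n A f -> Ck n A g -> Ck n A (fun w => f w * g w).
Proof.
  intros HA. induction n as [|n IH]; intros f g Hf Hg.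
  - destruct Hf as [Hf _]; destruct Hg as [Hg _]. split; auto.
    intros z Hz. exact (continuous_mult f g z (Hf z Hz) (Hg z Hz)).
  - split.
    + intros z Hz. exact (continuous_mult f g z (proj1 Hf z Hz) (proj1 Hg z Hz)).
    + intros k Hk. split.
      * intros z Hz. apply (ex_derive_mult (fun t => f (upd z k t)) (fun t => g (upd z k t)));
        eapply Ck_exd; eauto.
      * apply (Ck_ext A n HA (fun w => pd k f w * g w + f w * pd k g w)).
        -- intros w Hw. unfold pd. rewrite Derive_mult; try (eapply Ck_exd; eauto).
           rewrite !upd_coord. reflexivity.
        -- apply Ck_plus; auto; apply IH; auto using Ck_pd, Ck_mono.
Qed.


Lemma Ck_const (A : pt -> Prop) n c : open A -> Ck n A (fun _ => c).
Proof.
  intros HA. revert c. induction n as [|n IH]; intros c.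
  - split; auto. intros; apply continuous_const.
  - split. intros; apply continuous_const.
    intros k Hk. split.
    + intros; apply ex_derive_const.
    + apply (Ck_ext A n HA (fun _ => 0)); [|apply IH].
      intros w _. unfold pd. rewrite Derive_const. reflexivity.
Qed.

Lemma coord_upd_cases k j :
  (forall z t, coord (upd z k t) j = t) \/ (forall z t, coord (upd z k t) j = coord z j).
Proof.
  destruct k as [|[|[|[|k]]]], j as [|[|[|[|j]]]];
  first [ left; intros [[? ?] [? ?]] t; reflexivity
        | right; intros [[? ?] [? ?]] t; reflexivity ].
Qed.

Lemma Ck_coord (A : pt -> Prop) n j : open A -> Ck n A (fun w => coord w j).
Proof.
  intros HA. destruct n as [|n].
  - split; auto. intros; apply cont_coord.
  - split. intros; apply cont_coord.
    intros k Hk. destruct (coord_upd_cases k j) as [H|H]; split.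
    + intros z Hz. apply (ex_derive_ext (fun t => t)). intros; rewrite H; auto.
      apply ex_derive_id.
    + apply (Ck_ext A n HA (fun _ => 1)); [|apply Ck_const; auto].
      intros w _. unfold pd. rewrite (Derive_ext _ (fun t => t)).
      symmetry; apply Derive_id. intros; rewrite H; auto.
    + intros z Hz. apply (ex_derive_ext (fun t => coord z j)). intros; rewrite H; auto.
      apply ex_derive_const.
    + apply (Ck_ext A n HA (fun _ => 0)); [|apply Ck_const; auto].
      intros w _. unfold pd. rewrite (Derive_ext _ (fun t => coord w j)). 
      rewrite Derive_const; auto. intros; rewrite H; auto.
Qed.

Lemma Ck_inv (A : pt -> Prop) n : open A -> forall f : pt -> R,
  (forall w, A w -> f w <> 0) -> Ck n A f -> Ck n A (fun w => / f w).
Proof.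
  intros HA. induction n as [|n IH]; intros f Hnz Hf.
  - split; auto. intros z Hz.
    apply (continuous_comp f (fun x => / x)). apply Hf; auto.
    apply continuous_Rinv; auto.
  - split.
    + intros z Hz. apply (continuous_comp f (fun x => / x)). apply Hf; auto.
      apply continuous_Rinv; auto.
    + intros k Hk. split.
      * intros z Hz. apply (ex_derive_inv (fun t => f (upd z k t))).
        eapply Ck_exd; eauto. rewrite upd_coord; auto.
      * apply (Ck_ext A n HA (fun w => (-1) * pd k f w * (/ f w * / f w))).
        -- intros w Hw. unfold pd. rewrite Derive_inv; try (eapply Ck_exd; eauto).
           rewrite !upd_coord. field. auto. rewrite upd_coord; auto.
        -- apply Ck_mult; auto. apply Ck_mult; auto. apply Ck_const; auto.
           apply Ck_pd; auto. apply Ck_mult; [exact HA| |]; apply IH; auto; apply Ck_mono; auto.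
Qed.


Lemma sm_ext (A : pt -> Prop) (f g : pt -> R) : open A ->
  (forall w, A w -> f w = g w) -> smooth_on A f -> smooth_on A g.
Proof. intros HA H Hf n. apply (Ck_ext A n HA f); auto. Qed.

Lemma sm_plus (A : pt -> Prop) (f g : pt -> R) : open A ->
  smooth_on A f -> smooth_on A g -> smooth_on A (fun w => f w + g w).
Proof. intros HA Hf Hg n. apply Ck_plus; auto. Qed.

Lemma sm_mult (A : pt -> Prop) (f g : pt -> R) : open A ->
  smooth_on A f -> smooth_on A g -> smooth_on A (fun w => f w * g w).
Proof. intros HA Hf Hg n. apply Ck_mult; auto. Qed.

Lemma sm_const (A : pt -> Prop) c : open A -> smooth_on A (fun _ => c).
Proof. intros HA n. apply Ck_const; auto. Qed.

Lemma sm_coord (A : pt -> Prop) j : open A -> smooth_on A (fun w => coord w j).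
Proof. intros HA n. apply Ck_coord; auto. Qed.

Lemma sm_inv (A : pt -> Prop) (f : pt -> R) : open A ->
  (forall w, A w -> f w <> 0) -> smooth_on A f -> smooth_on A (fun w => / f w).
Proof. intros HA Hnz Hf n. apply Ck_inv; auto. Qed.

Lemma sm_pd (A : pt -> Prop) (f : pt -> R) k : open A ->
  smooth_on A f -> smooth_on A (pd k f).
Proof.
  intros HA Hf n.
  destruct (Nat.lt_ge_cases k 4) as [Hk|Hk].
  - apply Ck_pd; auto.
  - apply (Ck_ext A n HA (pd 3 f)). 
    + intros w _. destruct k as [|[|[|[|k]]]]; try lia. reflexivity.
    + apply Ck_pd; auto.
Qed.

Lemma sm_exd (A : pt -> Prop) (f : pt -> R) k z : smooth_on A f -> A z ->
  ex_derive (fun t => f (upd z k t)) (coord z k).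
Proof.
  intros Hf Hz.
  destruct (Nat.lt_ge_cases k 4) as [Hk|Hk].
  - apply (Ck_exd A 0 f k z); auto.
  - destruct k as [|[|[|[|k]]]]; try lia. apply (Ck_exd A 0 f 3 z); auto.
Qed.

Lemma sm_cont (A : pt -> Prop) (f : pt -> R) z : smooth_on A f -> A z -> continuous f z.
Proof. intros Hf Hz. apply (proj1 (Hf 0%nat)); auto. Qed.

Lemma sm_opp (A : pt -> Prop) (f : pt -> R) : open A ->
  smooth_on A f -> smooth_on A (fun w => - f w).
Proof.
  intros HA Hf. apply (sm_ext A (fun w => (-1) * f w)); auto.
  intros; ring. apply sm_mult; auto using sm_const.
Qed.

Lemma sm_minus (A : pt -> Prop) (f g : pt -> R) : open A ->
  smooth_on A f -> smooth_on A g -> smooth_on A (fun w => f w - g w).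
Proof. intros HA Hf Hg. apply sm_plus; auto. apply sm_opp; auto. Qed.

Lemma sm_div (A : pt -> Prop) (f g : pt -> R) : open A ->
  (forall w, A w -> g w <> 0) ->
  smooth_on A f -> smooth_on A g -> smooth_on A (fun w => f w / g w).
Proof. intros HA Hn Hf Hg. apply sm_mult; auto. apply sm_inv; auto. Qed.

Lemma sm_pow (A : pt -> Prop) (f : pt -> R) n : open A ->
  smooth_on A f -> smooth_on A (fun w => f w ^ n).
Proof.
  intros HA Hf. induction n as [|n IH]; simpl.
  - apply sm_const; auto.
  - apply sm_mult; auto.
Qed.


Lemma euler (A : pt -> Prop) (f : pt -> R) r z :
  conic A -> smooth_on A f -> homog r A f -> A z ->
  yc z 0 * dy 0 f z + yc z 1 * dy 1 f z = INR r * f z.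
Proof.
  intros [HA [Hnz Hsc]] Hf Hh Hz.
  destruct z as [b [y0 y1]].
  set (f2 := fun u v => f (b,(u,v))).
  assert (Hloc : locally (y0,y1) (fun u : R*R => A (b,u))).
  { pose proof (cont_pair (fun _ : R*R => b) (fun u => u) (y0,y1) (continuous_const _ _) (continuous_id _)) as Hc.
    exact (Hc A (HA _ Hz)). }
  assert (Hdiff : differentiable_pt_lim f2 y0 y1 (pd 2 f (b,(y0,y1))) (pd 3 f (b,(y0,y1)))).
  { apply (proj1 (filterdiff_differentiable_pt_lim _ _ _ _ _)).
    eapply filterdiff_ext_lin.
    apply (is_derive_filterdiff f2 y0 y1 (fun u v => pd 2 f (b,(u,v)))).
    - apply (filter_imp (fun u => A (b,u))); [|exact Hloc].
      intros [u1 u2] Hu.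
      exact (Derive_correct _ _ (sm_exd A f 2 (b,(u1,u2)) Hf Hu)).
    - exact (Derive_correct _ _ (sm_exd A f 3 (b,(y0,y1)) Hf Hz)).
    - apply (continuous_comp (fun u : R*R => (b,(fst u, snd u))) (pd 2 f)).
      + apply cont_pair. apply continuous_const. apply cont_pair.
        apply continuous_fst. apply continuous_snd.
      + simpl. apply (sm_cont A); auto. apply sm_pd; auto.
    - intros [u1 u2]. simpl. reflexivity. }
  assert (Hd1 : differentiable_pt_lim f2 (1*y0) (1*y1) (pd 2 f (b,(y0,y1))) (pd 3 f (b,(y0,y1))))
    by (rewrite !Rmult_1_l; exact Hdiff).
  assert (H0 : derivable_pt_lim (fun l => l*y0) 1 y0).
  { apply is_derive_Reals. auto_derive; auto; ring. }
  assert (H1 : derivable_pt_lim (fun l => l*y1) 1 y1).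
  { apply is_derive_Reals. auto_derive; auto; ring. }
  pose proof (derivable_pt_lim_comp_2d f2 (fun l => l*y0) (fun l => l*y1) 1 _ _ _ _ Hd1 H0 H1) as Hc.
  apply is_derive_Reals in Hc. apply is_derive_unique in Hc.
  assert (Hl : Derive (fun t => f2 (t*y0) (t*y1)) 1 = Derive (fun l => l ^ r * f (b,(y0,y1))) 1).
  { apply Derive_ext_loc.
    apply (filter_imp (fun l => 0 < l)). intros l Hl. exact (Hh _ l Hz Hl).
    apply (open_gt 0 1 Rlt_0_1). }
  assert (Hp : is_derive (fun l => l ^ r * f (b,(y0,y1))) 1 (INR r * f (b,(y0,y1)))).
  { auto_derive; auto. rewrite pow1. ring. }
  apply is_derive_unique in Hp.
  assert (E : pd 2 f (b,(y0,y1)) * y0 + pd 3 f (b,(y0,y1)) * y1 = INR r * f (b,(y0,y1))).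
  { rewrite <- Hc, <- Hp. exact Hl. }
  unfold yc, dy. simpl. rewrite <- E. ring.
Qed.


Definition Good (A : pt -> Prop) (F : pt -> R) (m : nat -> pt -> R) : Prop :=
  open A /\ smooth_on A F /\ smooth_on A (m 0%nat) /\ smooth_on A (m 1%nat) /\
  (forall w, A w -> F w <> 0) /\ (forall w, A w -> detg F w <> 0).



Lemma G_open A F m : Good A F m -> open A. Proof. intros H; apply H. Qed.
Lemma G_F A F m : Good A F m -> smooth_on A F. Proof. intros H; apply H. Qed.
Lemma G_m0 A F m : Good A F m -> smooth_on A (m 0%nat). Proof. intros H; apply H. Qed.
Lemma G_m1 A F m : Good A F m -> smooth_on A (m 1%nat). Proof. intros H; apply H. Qed.

Lemma sm_yc (A : pt -> Prop) i : open A -> smooth_on A (fun w => yc w i).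
Proof. intros; apply sm_coord; auto. Qed.
Lemma sm_dy (A : pt -> Prop) (f : pt -> R) i : open A -> smooth_on A f -> smooth_on A (dy i f).
Proof. intros; apply sm_pd; auto. Qed.
Lemma sm_dx (A : pt -> Prop) (f : pt -> R) i : open A -> smooth_on A f -> smooth_on A (dx i f).
Proof. intros; apply sm_pd; auto. Qed.

Ltac smt0 := first
  [ assumption
  | apply sm_const; assumption
  | apply sm_yc; assumption
  | apply sm_dy; [assumption|]
  | apply sm_dx; [assumption|]
  | apply sm_plus; [assumption| |]
  | apply sm_minus; [assumption| |]
  | apply sm_mult; [assumption| |]
  | apply sm_opp; [assumption|]
  | apply sm_pow; [assumption|] ].

Lemma sm_F2 A F m : Good A F m -> smooth_on A (F2 F).
Proof. intros H. pose proof (G_open _ _ _ H). pose proof (G_F _ _ _ H).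
  unfold F2. repeat smt0. Qed.

Lemma sm_g A F m i j : Good A F m -> smooth_on A (g F i j).
Proof. intros H. pose proof (G_open _ _ _ H). pose proof (sm_F2 _ _ _ H).
  unfold g. repeat smt0. Qed.

Lemma sm_detg A F m : Good A F m -> smooth_on A (detg F).
Proof. intros H. pose proof (G_open _ _ _ H).
  pose proof (sm_g _ _ _ 0 0 H). pose proof (sm_g _ _ _ 0 1 H).
  pose proof (sm_g _ _ _ 1 0 H). pose proof (sm_g _ _ _ 1 1 H).
  unfold detg. repeat smt0. Qed.

Lemma sm_ginv A F m i j : Good A F m -> smooth_on A (ginv F i j).
Proof. intros H. pose proof (G_open _ _ _ H). pose proof (sm_detg _ _ _ H).
  assert (Hd : forall w, A w -> detg F w <> 0) by apply H.
  destruct i as [|[|i]], j as [|[|j]]; unfold ginv;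
  (apply sm_div; [assumption|assumption| |assumption]);
  repeat (first [apply sm_opp; [assumption|] | eapply sm_g; eassumption]).
Qed.

Lemma sm_mu A F m i : Good A F m -> smooth_on A (mu F m i).
Proof. intros H. pose proof (G_open _ _ _ H).
  pose proof (G_m0 _ _ _ H). pose proof (G_m1 _ _ _ H).
  pose proof (sm_ginv _ _ _ i 0 H). pose proof (sm_ginv _ _ _ i 1 H).
  unfold mu, sum2. repeat smt0. Qed.

Lemma sm_C A F m i j k : Good A F m -> smooth_on A (Cijk F i j k).
Proof. intros H. pose proof (G_open _ _ _ H). pose proof (sm_F2 _ _ _ H).
  unfold Cijk. repeat smt0. Qed.

Lemma sm_dv2 A F m eps f : Good A F m -> smooth_on A f -> smooth_on A (dv2 F eps m f).
Proof. intros H Hf. pose proof (G_open _ _ _ H). pose proof (G_F _ _ _ H).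
  pose proof (sm_mu _ _ _ 0 H). pose proof (sm_mu _ _ _ 1 H).
  unfold dv2, sum2. repeat smt0. Qed.

Lemma sm_Gs A F m i : Good A F m -> smooth_on A (Gs F i).
Proof. intros H. pose proof (G_open _ _ _ H). pose proof (sm_F2 _ _ _ H).
  pose proof (sm_ginv _ _ _ i 0 H). pose proof (sm_ginv _ _ _ i 1 H).
  unfold Gs, sum2. repeat smt0. Qed.

Lemma sm_delta A F m i f : Good A F m -> smooth_on A f -> smooth_on A (delta F i f).
Proof. intros H Hf. pose proof (G_open _ _ _ H).
  pose proof (sm_Gs _ _ _ 0 H). pose proof (sm_Gs _ _ _ 1 H).
  unfold delta, Gji, sum2. repeat smt0. Qed.

Lemma sm_dh1 A F m f : Good A F m -> smooth_on A f -> smooth_on A (dh1 F f).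
Proof. intros H Hf. pose proof (G_open _ _ _ H). pose proof (G_F _ _ _ H).
  assert (Hn : forall w, A w -> F w <> 0) by apply H.
  pose proof (sm_delta _ _ _ 0 _ H Hf). pose proof (sm_delta _ _ _ 1 _ H Hf).
  unfold dh1, ellu, sum2. repeat (first [apply sm_div; [assumption|assumption| |] | smt0]). Qed.

Lemma sm_dh2 A F m eps f : Good A F m -> smooth_on A f -> smooth_on A (dh2 F eps m f).
Proof. intros H Hf. pose proof (G_open _ _ _ H).
  pose proof (sm_mu _ _ _ 0 H). pose proof (sm_mu _ _ _ 1 H).
  pose proof (sm_delta _ _ _ 0 _ H Hf). pose proof (sm_delta _ _ _ 1 _ H Hf).
  unfold dh2, sum2. repeat smt0. Qed.


Definition Dk (k : nat) (f : pt -> R) (z : pt) : Prop :=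
  ex_derive (fun t => f (upd z k t)) (coord z k).

Lemma pd_mult_pt k (f g : pt -> R) z : Dk k f z -> Dk k g z ->
  pd k (fun w => f w * g w) z = pd k f z * g z + f z * pd k g z.
Proof. intros Hf Hg. unfold pd. rewrite Derive_mult; auto. rewrite upd_coord; auto. Qed.

Lemma pd_plus_pt k (f g : pt -> R) z : Dk k f z -> Dk k g z ->
  pd k (fun w => f w + g w) z = pd k f z + pd k g z.
Proof. intros Hf Hg. unfold pd. rewrite Derive_plus; auto. Qed.

Lemma pd_minus_pt k (f g : pt -> R) z : Dk k f z -> Dk k g z ->
  pd k (fun w => f w - g w) z = pd k f z - pd k g z.
Proof. intros Hf Hg. unfold pd. rewrite Derive_minus; auto. Qed.

Lemma pd_scal_pt k c (f : pt -> R) z :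
  pd k (fun w => c * f w) z = c * pd k f z.
Proof. unfold pd. rewrite Derive_scal; auto. Qed.

Lemma pd_const_pt k c z : pd k (fun _ => c) z = 0.
Proof. unfold pd. apply Derive_const. Qed.

Lemma pd_sq_pt k (f : pt -> R) z : Dk k f z ->
  pd k (fun w => f w ^ 2) z = 2 * f z * pd k f z.
Proof. intros Hf. unfold pd. rewrite Derive_pow; auto. rewrite upd_coord. simpl. ring. Qed.

Lemma Dk_sm (A : pt -> Prop) k (f : pt -> R) z : smooth_on A f -> A z -> Dk k f z.
Proof. intros; apply (sm_exd A); auto. Qed.

Lemma dy_yc_same i z : (i < 2)%nat -> dy i (fun w => yc w i) z = 1.
Proof.
  intros Hi. destruct z as [b [y0 y1]].
  destruct i as [|[|i]]; try lia; unfold dy, pd, yc; simpl;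
  apply Derive_id.
Qed.

Lemma dy_yc_diff i j z : (i < 2)%nat -> (j < 2)%nat -> i <> j -> dy i (fun w => yc w j) z = 0.
Proof.
  intros Hi Hj Hij. destruct z as [b [y0 y1]].
  destruct i as [|[|i]]; try lia; destruct j as [|[|j]]; try lia; unfold dy, pd, yc; simpl;
  apply Derive_const.
Qed.

Lemma Dk_yc k j z : Dk k (fun w => yc w j) z.
Proof.
  unfold Dk, yc. destruct (coord_upd_cases k (2+j)) as [H|H].
  - apply (ex_derive_ext (fun t => t)). intros; rewrite H; auto. apply ex_derive_id.
  - apply (ex_derive_ext (fun t => coord z (2+j))). intros; rewrite H; auto. apply ex_derive_const.
Qed.

Lemma Dk_mult k (f g : pt -> R) z : Dk k f z -> Dk k g z -> Dk k (fun w => f w * g w) z.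
Proof. intros; apply (ex_derive_mult (fun t => f (upd z k t)) (fun t => g (upd z k t))); auto. Qed.
Lemma Dk_plus k (f g : pt -> R) z : Dk k f z -> Dk k g z -> Dk k (fun w => f w + g w) z.
Proof. intros; apply (ex_derive_plus (fun t => f (upd z k t)) (fun t => g (upd z k t))); auto. Qed.
Lemma Dk_const k c z : Dk k (fun _ => c) z.
Proof. unfold Dk. cbv beta. apply ex_derive_const. Qed.

Lemma Dk_inv k (f : pt -> R) z : Dk k f z -> f z <> 0 -> Dk k (fun w => / f w) z.
Proof. intros Hf Hn. apply (ex_derive_inv (fun t => f (upd z k t))); auto. rewrite upd_coord; auto. Qed.

Lemma dy_mult i (f g : pt -> R) z : Dk (2+i) f z -> Dk (2+i) g z ->
  dy i (fun w => f w * g w) z = dy i f z * g z + f z * dy i g z.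
Proof. intros; unfold dy; apply pd_mult_pt; auto. Qed.
Lemma dy_plus i (f g : pt -> R) z : Dk (2+i) f z -> Dk (2+i) g z ->
  dy i (fun w => f w + g w) z = dy i f z + dy i g z.
Proof. intros; unfold dy; apply pd_plus_pt; auto. Qed.
Lemma dy_scal i c (f : pt -> R) z : dy i (fun w => c * f w) z = c * dy i f z.
Proof. unfold dy; apply pd_scal_pt. Qed.

Lemma dv2_ext F eps m (f g : pt -> R) z : (forall w, f w = g w) -> dv2 F eps m f z = dv2 F eps m g z.
Proof.
  intros H. unfold dv2, sum2, dy, pd. rewrite (Derive_ext (fun t => f (upd z (2+0) t)) (fun t => g (upd z (2+0) t))) by auto.
  rewrite (Derive_ext (fun t => f (upd z (2+1) t)) (fun t => g (upd z (2+1) t))) by auto. reflexivity.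
Qed.

Lemma dv2_mult F eps m (f g : pt -> R) z : Dk 2 f z -> Dk 3 f z -> Dk 2 g z -> Dk 3 g z ->
  dv2 F eps m (fun w => f w * g w) z = dv2 F eps m f z * g z + f z * dv2 F eps m g z.
Proof. intros. unfold dv2, sum2. rewrite !dy_mult by auto. ring. Qed.
Lemma dv2_plus F eps m (f g : pt -> R) z : Dk 2 f z -> Dk 3 f z -> Dk 2 g z -> Dk 3 g z ->
  dv2 F eps m (fun w => f w + g w) z = dv2 F eps m f z + dv2 F eps m g z.
Proof. intros. unfold dv2, sum2. rewrite !dy_plus by auto. ring. Qed.
Lemma dv2_scal F eps m c (f : pt -> R) z :
  dv2 F eps m (fun w => c * f w) z = c * dv2 F eps m f z.
Proof. intros. unfold dv2, sum2. rewrite !dy_scal. ring. Qed.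

Lemma dy_ext (A : pt -> Prop) (f g : pt -> R) i z : open A -> A z ->
  (forall w, A w -> f w = g w) -> dy i f z = dy i g z.
Proof. intros; unfold dy; apply (pd_ext A); auto. Qed.
Lemma dy_const i c z : dy i (fun _ => c) z = 0.
Proof. unfold dy; apply pd_const_pt. Qed.


Lemma alg_mu e l0 l1 m0 m1 g00 g01 g10 g11 :
  (e = 1 \/ e = -1) -> g00 = l0*l0+e*m0*m0 -> g01 = l0*l1+e*m0*m1 ->
  g10 = l1*l0+e*m1*m0 -> g11 = l1*l1+e*m1*m1 ->
  g00*g11 - g01*g10 <> 0 ->
  l0*(g11/(g00*g11-g01*g10)*m0 + -g01/(g00*g11-g01*g10)*m1)
  + l1*(-g10/(g00*g11-g01*g10)*m0 + g00/(g00*g11-g01*g10)*m1) = 0 /\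
  m0*(g11/(g00*g11-g01*g10)*m0 + -g01/(g00*g11-g01*g10)*m1)
  + m1*(-g10/(g00*g11-g01*g10)*m0 + g00/(g00*g11-g01*g10)*m1) = e.
Proof.
  intros He H00 H01 H10 H11 Hd. subst.
  destruct He; subst; split; field; intro Hc; apply Hd; rewrite <- Hc; ring.
Qed.

Lemma contr e F I (L M U : nat -> R) (Dl Dm : nat -> nat -> R) (Dg : nat -> nat -> nat -> R) :
  e*e = 1 -> L 0%nat * U 0%nat + L 1%nat * U 1%nat = 0 -> M 0%nat * U 0%nat + M 1%nat * U 1%nat = e ->
  (forall k i j, (k<2)%nat -> (i<2)%nat -> (j<2)%nat ->
     Dg k i j = Dl k i * L j + L i * Dl k j + e*(Dm k i * M j + M i * Dm k j)) ->
  (forall k i j, (k<2)%nat -> (i<2)%nat -> (j<2)%nat ->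
     F * (/2 * Dg k i j) = I * M k * M i * M j) ->
  F * sum2 (fun k => sum2 (fun i => U k * U i * Dm k i)) = I * e.
Proof.
  intros He HL HM HDg HC.
  pose (S := sum2 (fun k => sum2 (fun i => sum2 (fun j => U k * U i * U j * (F * (/2 * Dg k i j)))))).
  assert (E1 : S = I * (M 0%nat * U 0%nat + M 1%nat * U 1%nat)^3).
  { unfold S, sum2. rewrite !HC by lia. ring. }
  assert (E2 : S = F * ((L 0%nat * U 0%nat + L 1%nat * U 1%nat) *
        sum2 (fun k => sum2 (fun i => U k * U i * Dl k i))
        + e * (M 0%nat * U 0%nat + M 1%nat * U 1%nat) * sum2 (fun k => sum2 (fun i => U k * U i * Dm k i)))).
  { unfold S, sum2. rewrite !HDg by lia. field. }
  rewrite HM in E1. rewrite HL, HM in E2. rewrite E1 in E2.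
  assert (I * e = I * e ^ 3).
  { simpl. replace (e*(e*(e*1))) with ((e*e)*e) by ring. rewrite He. ring. }
  rewrite H, E2. replace (F * (0 * sum2 (fun k => sum2 (fun i => U k * U i * Dl k i))
    + e * e * sum2 (fun k => sum2 (fun i => U k * U i * Dm k i))))
    with ((e*e) * (F * sum2 (fun k => sum2 (fun i => U k * U i * Dm k i)))) by ring.
  rewrite He. ring.
Qed.

Lemma contrI e F I (M U : nat -> R) (C : nat -> nat -> nat -> R) :
  e*e = 1 -> M 0%nat * U 0%nat + M 1%nat * U 1%nat = e ->
  (forall k i j, (k<2)%nat -> (i<2)%nat -> (j<2)%nat -> F * C k i j = I * M k * M i * M j) ->
  I = e * sum2 (fun k => sum2 (fun i => sum2 (fun j => U k * U i * U j * (F * C k i j)))).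
Proof.
  intros He HM HC. unfold sum2. rewrite !HC by lia.
  transitivity (e * (I * (M 0%nat * U 0%nat + M 1%nat * U 1%nat)^3)); [|ring].
  rewrite HM. simpl. replace (e * (I * (e * (e * (e * 1))))) with (I * ((e*e)*(e*e))) by ring.
  rewrite He. ring.
Qed.

Lemma phi_par (e m0 m1 u0 u1 p0 p1 : R) : e*e = 1 -> p0*m1 - p1*m0 = 0 ->
  m0*u0 + m1*u1 = e -> (m0 <> 0 \/ m1 <> 0) ->
  p0 = e*(u0*p0+u1*p1)*m0 /\ p1 = e*(u0*p0+u1*p1)*m1.
Proof.
  intros He Hh HM Hm.
  assert (A00 : m0*(p0 - e*(u0*p0+u1*p1)*m0) = m0*p0*(1 - e*(m0*u0+m1*u1)) + e*m0*u1*(p0*m1 - p1*m0)) by ring.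
  assert (A10 : m1*(p0 - e*(u0*p0+u1*p1)*m0) = p1*m0*(1 - e*(m0*u0+m1*u1)) + (1 - e*m0*u0)*(p0*m1 - p1*m0)) by ring.
  assert (A01 : m0*(p1 - e*(u0*p0+u1*p1)*m1) = p0*m1*(1 - e*(m0*u0+m1*u1)) - (1 - e*m1*u1)*(p0*m1 - p1*m0)) by ring.
  assert (A11 : m1*(p1 - e*(u0*p0+u1*p1)*m1) = m1*p1*(1 - e*(m0*u0+m1*u1)) - e*m1*u0*(p0*m1 - p1*m0)) by ring.
  rewrite HM, Hh, He in A00, A10, A01, A11.
  split; apply Rminus_diag_uniq; destruct Hm as [Hm|Hm].
  - apply (Rmult_eq_reg_l m0); auto. rewrite A00. ring.
  - apply (Rmult_eq_reg_l m1); auto. rewrite A10. ring.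
  - apply (Rmult_eq_reg_l m0); auto. rewrite A01. ring.
  - apply (Rmult_eq_reg_l m1); auto. rewrite A11. ring.
Qed.

Lemma xalg e F I l0 l1 m0 m1 u0 u1 p0 p1 (Du Dm P : nat -> nat -> R) :
  e*e = 1 -> l0*u0 + l1*u1 = 0 ->
  p0 = e*(u0*p0+u1*p1)*m0 -> p1 = e*(u0*p0+u1*p1)*m1 ->
  Du 0%nat 0%nat * m0 + Du 0%nat 1%nat * m1 = -(u0 * Dm 0%nat 0%nat + u1 * Dm 0%nat 1%nat) ->
  Du 1%nat 0%nat * m0 + Du 1%nat 1%nat * m1 = -(u0 * Dm 1%nat 0%nat + u1 * Dm 1%nat 1%nat) ->
  F * ((u0*u0*Dm 0%nat 0%nat + u0*u1*Dm 0%nat 1%nat) + (u1*u0*Dm 1%nat 0%nat + u1*u1*Dm 1%nat 1%nat)) = I * e ->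
  e * F * (u0 * (e * (l0 * (u0*p0+u1*p1) + F * ((Du 0%nat 0%nat * p0 + Du 0%nat 1%nat * p1) + (u0 * P 0%nat 0%nat + u1 * P 0%nat 1%nat))))
         + u1 * (e * (l1 * (u0*p0+u1*p1) + F * ((Du 1%nat 0%nat * p0 + Du 1%nat 1%nat * p1) + (u0 * P 1%nat 0%nat + u1 * P 1%nat 1%nat)))))
  + e * I * (e * F * (u0*p0+u1*p1)) + 2 * (e * F * (u0*p0+u1*p1))^2 + e - (e * F * (u0*p0+u1*p1))^2
  = F^2 * (((P 0%nat 0%nat + p0*p0)*u0*u0 + (P 0%nat 1%nat + p0*p1)*u0*u1)
         + ((P 1%nat 0%nat + p1*p0)*u1*u0 + (P 1%nat 1%nat + p1*p1)*u1*u1)) + e.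
Proof.
  intros He Hl Hp0 Hp1 K0 K1 HX.
  set (s := u0*p0+u1*p1) in *.
  assert (K0' : Du 0%nat 0%nat * p0 + Du 0%nat 1%nat * p1 = - e * s * (u0 * Dm 0%nat 0%nat + u1 * Dm 0%nat 1%nat)).
  { rewrite Hp0 at 1. rewrite Hp1 at 1.
    transitivity (e*s*(Du 0%nat 0%nat * m0 + Du 0%nat 1%nat * m1)); [ring|]. rewrite K0. ring. }
  assert (K1' : Du 1%nat 0%nat * p0 + Du 1%nat 1%nat * p1 = - e * s * (u0 * Dm 1%nat 0%nat + u1 * Dm 1%nat 1%nat)).
  { rewrite Hp0 at 1. rewrite Hp1 at 1.
    transitivity (e*s*(Du 1%nat 0%nat * m0 + Du 1%nat 1%nat * m1)); [ring|]. rewrite K1. ring. }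
  rewrite K0', K1'.
  set (X := (u0*u0*Dm 0%nat 0%nat + u0*u1*Dm 0%nat 1%nat) + (u1*u0*Dm 1%nat 0%nat + u1*u1*Dm 1%nat 1%nat)) in *.
  set (uQ := u0 * (u0 * P 0%nat 0%nat + u1 * P 0%nat 1%nat) + u1 * (u0 * P 1%nat 0%nat + u1 * P 1%nat 1%nat)).
  apply Rminus_diag_uniq.
  transitivity (e*e*F*s*(l0*u0+l1*u1) - e*e*e*F*s*(F*X - I*e) + (e*e-1)*(F^2*uQ + F^2*s^2 - e*e*I*F*s)).
  { unfold X, uQ, s. ring. }
  rewrite Hl, HX, He. ring.
Qed.

Lemma finalg e F I a b c h s2 dQ dP P Q rho x :
  (e = 1 \/ e = -1) -> x <> 0 ->
  x = s2 + e * I * a + 2 * a^2 + e - a^2 ->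
  rho = / x ->
  Q = / 2 * (e * rho * F^2 * (a * b + c - 2 * h)) ->
  P = - e * (a * Q) + / 2 * (F^2 * b) ->
  dP = - e * (s2 * Q + a * dQ) + / 2 * (0 * b + F^2 * c) ->
  a * P + dP + e * a * dQ - (I * a + 1) * Q - F^2 * h = 0.
Proof.
  intros He Hx Ex Erho EQ EP EdP.
  subst P dP Q rho x.
  destruct He; subst e; field; intro Hc; apply Hx; rewrite <- Hc; ring.
Qed.


Ltac smt := repeat (first [ assumption
  | apply sm_mu; assumption | apply sm_dv2; [assumption|] | eapply sm_dh1; [eassumption|]
  | apply sm_dh2; [assumption|] | apply sm_F2; assumption | apply sm_g; assumption
  | apply sm_C; assumption | smt0 ]).

Ltac dk := match goal with
  | HA : open ?A, Hz : ?A ?z |- Dk _ _ ?z => apply (Dk_sm A); [solve [smt] | exact Hz]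
  end.

Theorem lemma2p8 (A : pt -> Prop) (F : pt -> R) (eps : R)
  (m : nat -> pt -> R) (I phi : pt -> R) :
  conic A ->
  smooth_on A F -> homog 1 A F ->
  (forall z, A z -> F z <> 0) ->
  (forall z, A z -> detg F z <> 0) ->
  (eps = 1 \/ eps = -1) ->
  smooth_on A (m 0%nat) -> smooth_on A (m 1%nat) ->
  (forall i j z, (i < 2)%nat -> (j < 2)%nat -> A z ->
     g F i j z = ell F i z * ell F j z + eps * m i z * m j z) ->
  (forall i j k z, (i < 2)%nat -> (j < 2)%nat -> (k < 2)%nat -> A z ->
     F z * Cijk F i j k z = I z * m i z * m j z * m k z) ->
  smooth_on A phi -> homog 0 A phi ->
  (forall z, A z ->
     F z ^ 2 * sum2 (fun i => sum2 (fun j =>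
        (dy i (dy j phi) z + dy i phi z * dy j phi z) * mu F m i z * mu F m j z))
     + eps <> 0) ->
  forall z, A z ->
    dv2 F eps m phi z * Pc F eps m I phi z
    + dv2 F eps m (Pc F eps m I phi) z
    + eps * dv2 F eps m phi z * dv2 F eps m (Qc F eps m I phi) z
    - (I z * dv2 F eps m phi z + 1) * Qc F eps m I phi z
    - F z ^ 2 * dh2 F eps m phi z = 0.
Proof.
  intros Hcon HF Hh1 HFnz Hdet Heps Hm0 Hm1 Hg HC Hphi Hh0 Hnd z Hz.
  pose proof Hcon as [HA [Hyz Hsc]].
  assert (HG : Good A F m) by (repeat split; auto).
  assert (He2 : eps * eps = 1) by (destruct Heps; subst; ring).
  assert (Hsm : forall i, (i < 2)%nat -> smooth_on A (m i)).
  { intros i Hi. destruct i as [|[|i]]; auto; lia. }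
  assert (Hmu : forall w, A w -> ell F 0 w * mu F m 0 w + ell F 1 w * mu F m 1 w = 0 /\
                              m 0%nat w * mu F m 0 w + m 1%nat w * mu F m 1 w = eps).
  { intros w Hw. unfold mu, sum2, ginv.
    pose proof (Hdet w Hw) as Hd. unfold detg in *.
    apply (alg_mu eps (ell F 0 w) (ell F 1 w) (m 0%nat w) (m 1%nat w)); auto; apply Hg; auto. }
  assert (HE1 : forall w, A w -> yc w 0 * ell F 0 w + yc w 1 * ell F 1 w = F w).
  { intros w Hw. pose proof (euler A F 1 w Hcon HF Hh1 Hw) as H. unfold ell. simpl INR in H. lra. }
  assert (HE0 : yc z 0 * dy 0 phi z + yc z 1 * dy 1 phi z = 0).
  { pose proof (euler A phi 0 z Hcon Hphi Hh0 Hz) as H. simpl INR in H. lra. }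
  assert (HdF2 : forall w, A w -> forall j, dy j (F2 F) w = 2 * F w * ell F j w).
  { intros w Hw j. unfold dy, F2. apply pd_sq_pt. dk. }
  assert (Hyg : forall i, (i < 2)%nat -> yc z 0 * g F i 0 z + yc z 1 * g F i 1 z = F z * ell F i z).
  { intros i Hi.
    set (G := fun w => yc w 0 * dy 0 (F2 F) w + yc w 1 * dy 1 (F2 F) w).
    assert (HGA : forall w, A w -> G w = 2 * F2 F w).
    { intros w Hw. unfold G. rewrite !HdF2 by auto.
      transitivity (2 * F w * (yc w 0 * ell F 0 w + yc w 1 * ell F 1 w)); [ring|].
      rewrite HE1 by auto. unfold F2. ring. }
    assert (E1 : dy i G z = 2 * dy i (F2 F) z).
    { unfold dy. rewrite (pd_ext A G (fun w => 2 * F2 F w)) by auto. apply pd_scal_pt. }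
    unfold G in E1. rewrite dy_plus in E1 by dk. rewrite !dy_mult in E1 by dk.
    rewrite !HdF2 in E1 by auto. unfold g.
    destruct i as [|[|i]]; try lia.
    - rewrite dy_yc_same, (dy_yc_diff 0 1) in E1 by lia. lra.
    - rewrite dy_yc_same, (dy_yc_diff 1 0) in E1 by lia. lra. }
  destruct (Hmu z Hz) as [HlU HmU].
  assert (Hgz : forall i j, (i<2)%nat -> (j<2)%nat -> g F i j z = ell F i z * ell F j z + eps * m i z * m j z)
    by (intros; apply Hg; auto).
  assert (HM0 : m 0%nat z <> 0 \/ m 1%nat z <> 0).
  { destruct (Req_dec (m 0%nat z) 0) as [H0|H0]; [|left; auto].
    destruct (Req_dec (m 1%nat z) 0) as [H1|H1]; [|right; auto].
    exfalso. apply (Hdet z Hz). unfold detg. rewrite !Hgz by lia. rewrite H0, H1. ring. }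
  assert (Hmy : yc z 0 * m 0%nat z + yc z 1 * m 1%nat z = 0).
  { set (s := yc z 0 * m 0%nat z + yc z 1 * m 1%nat z).
    assert (Ei : forall i, (i<2)%nat -> eps * m i z * s = 0).
    { intros i Hi. pose proof (Hyg i Hi) as H. rewrite !Hgz in H by lia.
      pose proof (HE1 z Hz) as H'.
      transitivity ((yc z 0 * (ell F i z * ell F 0 z + eps * m i z * m 0%nat z) + yc z 1 * (ell F i z * ell F 1 z + eps * m i z * m 1%nat z)) - ell F i z * (yc z 0 * ell F 0 z + yc z 1 * ell F 1 z)).
      { unfold s. ring. }
      rewrite H, H'. ring. }
    destruct (Req_dec s 0) as [Hs|Hs]; auto. exfalso.
    assert (He0 : eps <> 0) by (destruct Heps; lra).
    destruct HM0 as [Hm|Hm].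
    - pose proof (Ei 0%nat ltac:(lia)) as H.
      destruct (Rmult_integral _ _ H) as [H2|H2]; [|contradiction].
      destruct (Rmult_integral _ _ H2) as [H3|H3]; contradiction.
    - pose proof (Ei 1%nat ltac:(lia)) as H.
      destruct (Rmult_integral _ _ H) as [H2|H2]; [|contradiction].
      destruct (Rmult_integral _ _ H2) as [H3|H3]; contradiction. }
  assert (Hh : dy 0 phi z * m 1%nat z - dy 1 phi z * m 0%nat z = 0).
  { set (c := dy 0 phi z * m 1%nat z - dy 1 phi z * m 0%nat z).
    assert (E0 : yc z 0 * c = m 1%nat z * (yc z 0 * dy 0 phi z + yc z 1 * dy 1 phi z) - dy 1 phi z * (yc z 0 * m 0%nat z + yc z 1 * m 1%nat z)) by (unfold c; ring).
    assert (E1 : yc z 1 * c = dy 0 phi z * (yc z 0 * m 0%nat z + yc z 1 * m 1%nat z) - m 0%nat z * (yc z 0 * dy 0 phi z + yc z 1 * dy 1 phi z)) by (unfold c; ring).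
    rewrite HE0, Hmy in E0, E1.
    assert (E0' : yc z 0 * c = 0) by (rewrite E0; ring).
    assert (E1' : yc z 1 * c = 0) by (rewrite E1; ring).
    destruct (Req_dec c 0) as [Hc|Hc]; auto. exfalso.
    destruct (Rmult_integral _ _ E0') as [Y0|Y0]; [|contradiction].
    destruct (Rmult_integral _ _ E1') as [Y1|Y1]; [|contradiction].
    apply (Hyz z Hz). clear -Y0 Y1. unfold yc in *. destruct z as [b [y0 y1]]. simpl in *. subst. reflexivity. }
  destruct (phi_par eps (m 0%nat z) (m 1%nat z) (mu F m 0 z) (mu F m 1 z) (dy 0 phi z) (dy 1 phi z) He2 Hh HmU HM0) as [Hp0 Hp1].
  assert (HX : F z * sum2 (fun k => sum2 (fun i => mu F m k z * mu F m i z * dy k (m i) z)) = I z * eps).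
  { apply (contr eps (F z) (I z) (fun i => ell F i z) (fun i => m i z) (fun i => mu F m i z)
      (fun k i => dy k (ell F i) z) (fun k i => dy k (m i) z) (fun k i j => dy k (g F i j) z)); auto.
    - intros k i j Hk Hi Hj. cbv beta.
      pose proof (Hsm i Hi). pose proof (Hsm j Hj).
      rewrite (dy_ext A (g F i j) (fun w => ell F i w * ell F j w + eps * m i w * m j w)) by (auto; intros; apply Hg; auto).
      rewrite dy_plus by dk. rewrite !dy_mult by dk. rewrite ?dy_scal, ?dy_const. ring.
    - intros k i j Hk Hi Hj. cbv beta. rewrite <- (HC k i j z) by auto. unfold Cijk, g. rewrite dy_scal. field. }
  assert (sI : smooth_on A I).
  { apply (sm_ext A (fun w => eps * sum2 (fun k => sum2 (fun i => sum2 (fun j => mu F m k w * mu F m i w * mu F m j w * (F w * Cijk F k i j w)))))); auto.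
    - intros w Hw. symmetry. destruct (Hmu w Hw) as [_ HmUw].
      apply (contrI eps (F w) (I w) (fun i => m i w) (fun i => mu F m i w) (fun k i j => Cijk F k i j w)); [exact He2 | exact HmUw | intros; apply HC; auto].
    - unfold sum2. smt. }
  assert (Hdmu : forall i, (i<2)%nat -> dy i (mu F m 0) z * m 0%nat z + dy i (mu F m 1) z * m 1%nat z = -(mu F m 0 z * dy i (m 0%nat) z + mu F m 1 z * dy i (m 1%nat) z)).
  { intros i Hi.
    assert (E : dy i (fun w => m 0%nat w * mu F m 0 w + m 1%nat w * mu F m 1 w) z = 0).
    { rewrite (dy_ext A _ (fun _ => eps)) by (auto; intros w Hw; apply Hmu; auto). apply dy_const. }
    rewrite dy_plus, !dy_mult in E by dk. lra. }
  assert (Hdv2phi : forall i, dy i (dv2 F eps m phi) z = eps * (ell F i z * (mu F m 0 z * dy 0 phi z + mu F m 1 z * dy 1 phi z) + F z * ((dy i (mu F m 0) z * dy 0 phi z + dy i (mu F m 1) z * dy 1 phi z) + (mu F m 0 z * dy i (dy 0 phi) z + mu F m 1 z * dy i (dy 1 phi) z)))).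
  { intros i. unfold dv2, sum2. rewrite dy_mult by dk. rewrite dy_scal. rewrite dy_plus by dk. rewrite !dy_mult by dk.
    unfold ell. ring. }
  set (xz := Defs.sigma F eps m I phi z + eps - dv2 F eps m phi z ^ 2).
  assert (Hxz : xz = F z ^ 2 * sum2 (fun i => sum2 (fun j =>
        (dy i (dy j phi) z + dy i phi z * dy j phi z) * mu F m i z * mu F m j z)) + eps).
  { unfold xz, Defs.sigma.
    change (dv2 F eps m (dv2 F eps m phi) z) with (eps * F z * (mu F m 0 z * dy 0 (dv2 F eps m phi) z + mu F m 1 z * dy 1 (dv2 F eps m phi) z)).
    rewrite (Hdv2phi 0%nat), (Hdv2phi 1%nat).
    exact (xalg eps (F z) (I z) (ell F 0 z) (ell F 1 z) (m 0%nat z) (m 1%nat z) (mu F m 0 z) (mu F m 1 z)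
      (dy 0 phi z) (dy 1 phi z) (fun i j => dy i (mu F m j) z) (fun i j => dy i (m j) z) (fun i j => dy i (dy j phi) z)
      He2 HlU Hp0 Hp1 (Hdmu 0%nat ltac:(lia)) (Hdmu 1%nat ltac:(lia)) HX). }
  assert (Hx0 : xz <> 0) by (rewrite Hxz; apply Hnd; auto).
  assert (ssig : smooth_on A (Defs.sigma F eps m I phi)) by (unfold Defs.sigma; smt).
  assert (HQd : forall k, Dk k (Qc F eps m I phi) z).
  { intros k. unfold Qc. apply Dk_mult; [apply Dk_const|].
    apply Dk_mult; [|dk]. apply Dk_mult; [|dk]. apply Dk_mult; [apply Dk_const|].
    unfold Defs.rho. apply Dk_inv; [dk|exact Hx0]. }
  assert (HdvF2 : dv2 F eps m (F2 F) z = 0).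
  { unfold dv2, sum2. rewrite !HdF2 by auto.
    transitivity (2 * eps * F z * F z * (ell F 0 z * mu F m 0 z + ell F 1 z * mu F m 1 z)); [ring|].
    rewrite HlU. ring. }
  assert (EP : dv2 F eps m (Pc F eps m I phi) z =
     - eps * (dv2 F eps m (dv2 F eps m phi) z * Qc F eps m I phi z + dv2 F eps m phi z * dv2 F eps m (Qc F eps m I phi) z)
     + / 2 * (dv2 F eps m (F2 F) z * dh1 F phi z + F2 F z * dv2 F eps m (dh1 F phi) z)).
  { rewrite (dv2_ext F eps m (Pc F eps m I phi)
      (fun w => (- eps) * (dv2 F eps m phi w * Qc F eps m I phi w) + / 2 * (F2 F w * dh1 F phi w))).
    2: { intros w. unfold Pc, Qc, F2. destruct Heps as [He|He]; rewrite He; field. }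
    rewrite dv2_plus by (first [apply Dk_mult; [apply Dk_const| apply Dk_mult; [dk|apply HQd]] | apply Dk_mult; [apply Dk_const| dk]]).
    rewrite !dv2_scal. rewrite !dv2_mult; try dk; try apply HQd. reflexivity. }
  apply (finalg eps (F z) (I z) (dv2 F eps m phi z) (dh1 F phi z) (dv2 F eps m (dh1 F phi) z) (dh2 F eps m phi z)
     (dv2 F eps m (dv2 F eps m phi) z) (dv2 F eps m (Qc F eps m I phi) z) (dv2 F eps m (Pc F eps m I phi) z)
     (Pc F eps m I phi z) (Qc F eps m I phi z) (Defs.rho F eps m I phi z) xz); auto.
  - unfold Pc, Qc. destruct Heps as [He|He]; rewrite He; field.
  - rewrite EP, HdvF2. unfold F2. reflexivity.
Qed.
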